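(* Let $R\subseteq\{e,c,w\}$. $\mathbf{NACCLL}^-_R$ is strongly conservative over $\mathbf{InFNL}_R$, and $\mathbf{NACCLL}_R$ is strongly conservative over $\mathbf{CyInFNL}_R$: for every set $\mathcal S\cup\{s\}$ of $\mathcal L^0$-sequents (sequents not containing $!$), $\mathcal S\vdash_{\mathbf{NACCLL}^-_R}s\iff\mathcal S\vdash_{\mathbf{InFNL}_R}s$, and $\mathcal S\vdash_{\mathbf{NACCLL}_R}s\iff\mathcal S\vdash_{\mathbf{CyInFNL}_R}s$.
   Context: Formulas: terms over a countably infinite set of variables in $\{\wedge,\vee,\cdot,\backslash,/,!,1,0\}$; $\mathcal L^0$-formulas are those without $!$. Structures: elements of the free unital groupoid $(Fm^\circ,\circ,\varepsilon)$ generated by formulas ($\circ$ non-associative, $\varepsilon$ empty structure and unit). $k$ ranges over structures in the free unital groupoid generated by formulas $!a$ (including $\varepsilon$). A context $u$ is a structure with exactly one hole; $u(x)$ fills it. A sequent is $x\Rightarrow\delta$, $\delta$ a formula or the empty stoup $\epsilon$. $\mathbf{NACILL}^0$: initial sequents $a\Rightarrow a$, $\varepsilon\Rightarrow 1$, $0\Rightarrow\epsilon$; rules (premises / conclusion): (cut) $x\Rightarrow a$, $u(a)\Rightarrow\delta$ / $u(x)\Rightarrow\delta$; $(1\Rightarrow)$ $u(\varepsilon)\Rightarrow\delta$ / $u(1)\Rightarrow\delta$; $(\Rightarrow 0)$ $x\Rightarrow\epsilon$ / $x\Rightarrow 0$; $(\backslash\Rightarrow)$ $x\Rightarrow a$,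 $u(b)\Rightarrow\delta$ / $u(x\circ(a\backslash b))\Rightarrow\delta$; $(\Rightarrow\backslash)$ $a\circ x\Rightarrow b$ / $x\Rightarrow a\backslash b$; $(/\Rightarrow)$ $x\Rightarrow a$, $u(b)\Rightarrow\delta$ / $u((b/a)\circ x)\Rightarrow\delta$; $(\Rightarrow/)$ $x\circ a\Rightarrow b$ / $x\Rightarrow b/a$; $(\cdot\Rightarrow)$ $u(a\circ b)\Rightarrow\delta$ / $u(a\cdot b)\Rightarrow\delta$; $(\Rightarrow\cdot)$ $x\Rightarrow a$, $y\Rightarrow b$ / $x\circ y\Rightarrow a\cdot b$; $(\wedge\Rightarrow)$ $u(a_i)\Rightarrow\delta$ / $u(a_1\wedge a_2)\Rightarrow\delta$; $(\Rightarrow\wedge)$ $x\Rightarrow a$, $x\Rightarrow b$ / $x\Rightarrow a\wedge b$; $(\vee\Rightarrow)$ $u(a)\Rightarrow\delta$, $u(b)\Rightarrow\delta$ / $u(a\vee b)\Rightarrow\delta$; $(\Rightarrow\vee)$ $x\Rightarrow a_i$ / $x\Rightarrow a_1\vee a_2$; $(!\Rightarrow)$ $u(a)\Rightarrow\delta$ / $u(!a)\Rightarrow\delta$; $(\Rightarrow!)$ $k\Rightarrow a$ / $k\Rightarrow !a$; $(kw)$ $u(\varepsilon)\Rightarrow\delta$ / $u(k)\Rightarrow\delta$; $(kc)$ $u(k\circ k)\Rightarrow\delta$ / $u(k)\Rightarrow\delta$; two-directional: $(ke)$ $u(k\circ y)\Rightarrow\delta\leftrightarrow u(y\circ k)\Rightarrow\delta$;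 $(ka1)$ $u((k\circ y)\circ z)\Rightarrow\delta\leftrightarrow u(k\circ(y\circ z))\Rightarrow\delta$; $(ka2)$ $u((x\circ y)\circ k)\Rightarrow\delta\leftrightarrow u(x\circ(y\circ k))\Rightarrow\delta$. $\mathbf{NACCLL}^-$: $\mathbf{NACILL}^0$ plus initial sequents ${\sim}(-a)\Rightarrow a$, $-({\sim}a)\Rightarrow a$, $({\sim}a)/b\Rightarrow a\backslash(-b)$, $a\backslash(-b)\Rightarrow({\sim}a)/b$, where ${\sim}a:=a\backslash 0$, $-a:=0/a$. $\mathbf{NACCLL}$: additionally ${\sim}a\Rightarrow -a$ and $-a\Rightarrow{\sim}a$. $\mathbf{InFNL}$ ($\mathbf{CyInFNL}$): the $!$-free fragment of $\mathbf{NACCLL}^-$ ($\mathbf{NACCLL}$), i.e. only $!$-free formulas and without the rules $(!\Rightarrow),(\Rightarrow!),(kw),(kc),(ke),(ka1),(ka2)$. Structural rules: $(e)$ $u(x\circ y)\Rightarrow\delta$ / $u(y\circ x)\Rightarrow\delta$; $(c)$ $u(x\circ x)\Rightarrow\delta$ / $u(x)\Rightarrow\delta$; $(i)$ $u(\varepsilon)\Rightarrow\delta$ / $u(x)\Rightarrow\delta$; $(o)$ $x\Rightarrow\epsilon$ / $x\Rightarrow a$; $(w)$ means both $(i)$ and $(o)$. Subscript $R$ adds the rules in $R$. $\mathcal S\vdash s$: there is a derivation of $s$ whose leaves are initial sequents or members of $\mathcal S$. *)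

(* Defs.v *)
From Stdlib Require Import List Bool.
Import ListNotations.

Inductive fm : Type :=
| Var  : nat -> fm
| Meet : fm -> fm -> fm
| Join : fm -> fm -> fm
| Prod : fm -> fm -> fm
| Ldiv : fm -> fm -> fm        (* Ldiv a b = a \ b *)
| Rdiv : fm -> fm -> fm        (* Rdiv b a = b / a *)
| Bang : fm -> fm
| One  : fm
| Zero : fm.

Definition tilde (a : fm) : fm := Ldiv a Zero.
Definition minus (a : fm) : fm := Rdiv Zero a.

(* Free unital groupoid over formulas: a structure is either the unit
   (None = epsilon) or a nonempty binary tree (no epsilon inside), so that
   epsilon o x = x = x o epsilon holds literally. *)
Inductive nst : Type :=
| NF : fm -> nst
| NC : nst -> nst -> nst.

Definition st : Type := option nst.

Definition SEmp : st := None.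
Definition SF (a : fm) : st := Some (NF a).
Definition comp (x y : st) : st :=
  match x, y with
  | None, _ => y
  | _, None => x
  | Some x', Some y' => Some (NC x' y')
  end.

Inductive ctx : Type :=
| Hole : ctx
| CL : ctx -> st -> ctx
| CR : st -> ctx -> ctx.

Fixpoint fill (u : ctx) (z : st) : st :=
  match u with
  | Hole => z
  | CL u' y => comp (fill u' z) y
  | CR x u' => comp x (fill u' z)
  end.

Fixpoint isKn (x : nst) : Prop :=
  match x with
  | NF (Bang _) => True
  | NF _ => False
  | NC x y => isKn x /\ isKn y
  end.

Definition isK (x : st) : Prop :=
  match x with None => True | Some x' => isKn x' end.

(* Sequents x => delta, delta a formula or the empty stoup (None). *)
Definition seqnt : Type := (st * option fm)%type.

Fixpoint fm_L0 (a : fm) : bool :=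
  match a with
  | Var _ | One | Zero => true
  | Meet a b | Join a b | Prod a b | Ldiv a b | Rdiv a b => fm_L0 a && fm_L0 b
  | Bang _ => false
  end.

Fixpoint nst_L0 (x : nst) : bool :=
  match x with
  | NF a => fm_L0 a
  | NC x y => nst_L0 x && nst_L0 y
  end.

Definition st_L0 (x : st) : bool :=
  match x with None => true | Some x' => nst_L0 x' end.

Definition seq_L0 (s : seqnt) : bool :=
  st_L0 (fst s) && match snd s with None => true | Some a => fm_L0 a end.

Record rset : Type := { r_e : bool; r_c : bool; r_w : bool }.

(* A system: cyc = add ~a=>-a and -a=>~a;  bang = include the exponential
   rules (!=>),(=>!),(kw),(kc),(ke),(ka1),(ka2) and allow !-formulas. *)
Record sys : Type := { s_cyc : bool; s_bang : bool; s_R : rset }.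

Inductive rule (T : sys) : list seqnt -> seqnt -> Prop :=
| r_id a : rule T [] (SF a, Some a)
| r_one : rule T [] (SEmp, Some One)
| r_zero : rule T [] (SF Zero, None)
| r_in1 a : rule T [] (SF (tilde (minus a)), Some a)
| r_in2 a : rule T [] (SF (minus (tilde a)), Some a)
| r_in3 a b : rule T [] (SF (Rdiv (tilde a) b), Some (Ldiv a (minus b)))
| r_in4 a b : rule T [] (SF (Ldiv a (minus b)), Some (Rdiv (tilde a) b))
| r_cy1 a : s_cyc T = true -> rule T [] (SF (tilde a), Some (minus a))
| r_cy2 a : s_cyc T = true -> rule T [] (SF (minus a), Some (tilde a))
| r_cut x a u d : rule T [(x, Some a); (fill u (SF a), d)] (fill u x, d)
| r_oneL u d : rule T [(fill u SEmp, d)] (fill u (SF One), d)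
| r_zeroR x : rule T [(x, None)] (x, Some Zero)
| r_ldivL x a b u d :
    rule T [(x, Some a); (fill u (SF b), d)] (fill u (comp x (SF (Ldiv a b))), d)
| r_ldivR x a b : rule T [(comp (SF a) x, Some b)] (x, Some (Ldiv a b))
| r_rdivL x a b u d :
    rule T [(x, Some a); (fill u (SF b), d)] (fill u (comp (SF (Rdiv b a)) x), d)
| r_rdivR x a b : rule T [(comp x (SF a), Some b)] (x, Some (Rdiv b a))
| r_prodL u a b d : rule T [(fill u (comp (SF a) (SF b)), d)] (fill u (SF (Prod a b)), d)
| r_prodR x y a b : rule T [(x, Some a); (y, Some b)] (comp x y, Some (Prod a b))
| r_meetL1 u a b d : rule T [(fill u (SF a), d)] (fill u (SF (Meet a b)), d)
| r_meetL2 u a b d : rule T [(fill u (SF b), d)] (fill u (SF (Meet a b)), d)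
| r_meetR x a b : rule T [(x, Some a); (x, Some b)] (x, Some (Meet a b))
| r_joinL u a b d :
    rule T [(fill u (SF a), d); (fill u (SF b), d)] (fill u (SF (Join a b)), d)
| r_joinR1 x a b : rule T [(x, Some a)] (x, Some (Join a b))
| r_joinR2 x a b : rule T [(x, Some b)] (x, Some (Join a b))
| r_bangL u a d : s_bang T = true -> rule T [(fill u (SF a), d)] (fill u (SF (Bang a)), d)
| r_bangR k a : s_bang T = true -> isK k -> rule T [(k, Some a)] (k, Some (Bang a))
| r_kw u k d : s_bang T = true -> isK k -> rule T [(fill u SEmp, d)] (fill u k, d)
| r_kc u k d : s_bang T = true -> isK k -> rule T [(fill u (comp k k), d)] (fill u k, d)
| r_ke1 u k y d : s_bang T = true -> isK k ->
    rule T [(fill u (comp k y), d)] (fill u (comp y k), d)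
| r_ke2 u k y d : s_bang T = true -> isK k ->
    rule T [(fill u (comp y k), d)] (fill u (comp k y), d)
| r_ka11 u k y z d : s_bang T = true -> isK k ->
    rule T [(fill u (comp (comp k y) z), d)] (fill u (comp k (comp y z)), d)
| r_ka12 u k y z d : s_bang T = true -> isK k ->
    rule T [(fill u (comp k (comp y z)), d)] (fill u (comp (comp k y) z), d)
| r_ka21 u k x y d : s_bang T = true -> isK k ->
    rule T [(fill u (comp (comp x y) k), d)] (fill u (comp x (comp y k)), d)
| r_ka22 u k x y d : s_bang T = true -> isK k ->
    rule T [(fill u (comp x (comp y k)), d)] (fill u (comp (comp x y) k), d)
| r_ex u x y d : r_e (s_R T) = true ->
    rule T [(fill u (comp x y), d)] (fill u (comp y x), d)
| r_con u x d : r_c (s_R T) = true ->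
    rule T [(fill u (comp x x), d)] (fill u x, d)
| r_wi u x d : r_w (s_R T) = true ->
    rule T [(fill u SEmp, d)] (fill u x, d)
| r_wo x a : r_w (s_R T) = true ->
    rule T [(x, None)] (x, Some a).

(* Derivability from hypotheses S.  In a !-free system (bang = false) every
   sequent occurring in the derivation must be !-free. *)
Inductive derivable (T : sys) (S : seqnt -> Prop) : seqnt -> Prop :=
| d_hyp s : S s -> derivable T S s
| d_rule prems c :
    rule T prems c ->
    (s_bang T = true \/ seq_L0 c = true) ->
    (forall p, In p prems -> derivable T S p) ->
    derivable T S c.

Definition NACCLLm (R : rset) : sys := {| s_cyc := false; s_bang := true;  s_R := R |}.
Definition NACCLL  (R : rset) : sys := {| s_cyc := true;  s_bang := true;  s_R := R |}.
Definition InFNL   (R : rset) : sys := {| s_cyc := false; s_bang := false; s_R := R |}.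
Definition CyInFNL (R : rset) : sys := {| s_cyc := true;  s_bang := false; s_R := R |}.

(* Main.v *)
Require Import Defs.
From Stdlib Require Import List Bool ClassicalEpsilon.
Import ListNotations.

Lemma comp_None_r x : comp x None = x. Proof. destruct x; reflexivity. Qed.

Fixpoint ctx_L0 (u:ctx) : bool := match u with
  Hole => true | CL u y => ctx_L0 u && st_L0 y | CR x u => st_L0 x && ctx_L0 u end.

Lemma compL0 x y : st_L0 (comp x y) = st_L0 x && st_L0 y.
Proof. destruct x, y; simpl; rewrite ?andb_true_r; auto. Qed.

Lemma fillL0 u z : st_L0 (fill u z) = ctx_L0 u && st_L0 z.
Proof. induction u; simpl; rewrite ?compL0, ?IHu; auto;
  destruct (ctx_L0 u), (st_L0 z), (st_L0 s); reflexivity. Qed.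

Fixpoint ccomp (u v : ctx) : ctx := match u with
  Hole => v | CL u y => CL (ccomp u v) y | CR x u => CR x (ccomp u v) end.
Lemma fill_ccomp u v z : fill (ccomp u v) z = fill u (fill v z).
Proof. induction u; simpl; congruence. Qed.
Lemma ccompL0 u v : ctx_L0 (ccomp u v) = ctx_L0 u && ctx_L0 v.
Proof. induction u; simpl; rewrite ?IHu; auto;
  destruct (ctx_L0 u), (ctx_L0 v), (st_L0 s); reflexivity. Qed.

Ltac bsplit := repeat match goal with
  | H : _ && _ = true |- _ => apply andb_prop in H; destruct H
  end.
Ltac l0 := unfold seq_L0 in *; cbn [fst snd] in *;
  rewrite ?fillL0, ?compL0, ?ccompL0 in *;
  simpl in *; bsplit; repeat (apply andb_true_intro; split); auto.

Section Main.
Variable cyc : bool. Variable R : rset. Variable S : seqnt -> Prop.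
Hypothesis HS : forall t, S t -> seq_L0 t = true.
Definition Tgt := {| s_cyc := cyc; s_bang := false; s_R := R |}.
Notation Dv := (derivable Tgt S).

Lemma Dv_L0 s : Dv s -> seq_L0 s = true.
Proof. induction 1 as [s Hs|p c Hr Hc Hp IH]; [apply HS; auto|].
  destruct Hc as [Hc|Hc]; [discriminate|exact Hc]. Qed.

Lemma app0 c : rule Tgt [] c -> seq_L0 c = true -> Dv c.
Proof. intros H1 H2. apply (d_rule _ _ [] c H1 (or_intror H2)). intros p []. Qed.
Lemma app1 p c : rule Tgt [p] c -> seq_L0 c = true -> Dv p -> Dv c.
Proof. intros H1 H2 H3. apply (d_rule _ _ [p] c H1 (or_intror H2)). intros q [<-|[]]; auto. Qed.
Lemma app2 p q c : rule Tgt [p;q] c -> seq_L0 c = true -> Dv p -> Dv q -> Dv c.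
Proof. intros H1 H2 H3 H4. apply (d_rule _ _ [p;q] c H1 (or_intror H2)).
  intros r [<-|[<-|[]]]; auto. Qed.

Ltac a1 H := let X := fresh in pose proof (Dv_L0 _ H) as X.
Ltac fin := repeat match goal with H : Dv _ |- _ => a1 H; revert H end; intros; l0.

Lemma T_id a : fm_L0 a = true -> Dv (SF a, Some a).
Proof. intros; apply app0; [constructor|l0]. Qed.
Lemma T_one : Dv (SEmp, Some One).
Proof. intros; apply app0; [constructor|l0]. Qed.
Lemma T_zero : Dv (SF Zero, None).
Proof. intros; apply app0; [constructor|l0]. Qed.
Lemma T_in1 a : fm_L0 a = true -> Dv (SF (tilde (minus a)), Some a).
Proof. intros; apply app0; [constructor|l0]. Qed.
Lemma T_in2 a : fm_L0 a = true -> Dv (SF (minus (tilde a)), Some a).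
Proof. intros; apply app0; [constructor|l0]. Qed.
Lemma T_in3 a b : fm_L0 a = true -> fm_L0 b = true -> Dv (SF (Rdiv (tilde a) b), Some (Ldiv a (minus b))).
Proof. intros; apply app0; [constructor|l0]. Qed.
Lemma T_in4 a b : fm_L0 a = true -> fm_L0 b = true -> Dv (SF (Ldiv a (minus b)), Some (Rdiv (tilde a) b)).
Proof. intros; apply app0; [constructor|l0]. Qed.
Lemma T_cy1 a : cyc = true -> fm_L0 a = true -> Dv (SF (tilde a), Some (minus a)).
Proof. intros; apply app0; [constructor; auto|l0]. Qed.
Lemma T_cy2 a : cyc = true -> fm_L0 a = true -> Dv (SF (minus a), Some (tilde a)).
Proof. intros; apply app0; [constructor; auto|l0]. Qed.

Lemma T_cut x a u d : Dv (x, Some a) -> Dv (fill u (SF a), d) -> Dv (fill u x, d).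
Proof. intros H1 H2; apply (app2 _ _ _ (r_cut _ x a u d)); auto; fin. Qed.
Lemma T_oneL u d : Dv (fill u SEmp, d) -> Dv (fill u (SF One), d).
Proof. intros H1; apply (app1 _ _ (r_oneL _ u d)); auto; fin. Qed.
Lemma T_zeroR x : Dv (x, None) -> Dv (x, Some Zero).
Proof. intros H1; apply (app1 _ _ (r_zeroR _ x)); auto; fin. Qed.
Lemma T_ldivL x a b u d : Dv (x, Some a) -> Dv (fill u (SF b), d) -> Dv (fill u (comp x (SF (Ldiv a b))), d).
Proof. intros H1 H2; apply (app2 _ _ _ (r_ldivL _ x a b u d)); auto; fin. Qed.
Lemma T_rdivL x a b u d : Dv (x, Some a) -> Dv (fill u (SF b), d) -> Dv (fill u (comp (SF (Rdiv b a)) x), d).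
Proof. intros H1 H2; apply (app2 _ _ _ (r_rdivL _ x a b u d)); auto; fin. Qed.
Lemma T_ldivR x a b : Dv (comp (SF a) x, Some b) -> Dv (x, Some (Ldiv a b)).
Proof. intros H1; apply (app1 _ _ (r_ldivR _ x a b)); auto; fin. Qed.
Lemma T_rdivR x a b : Dv (comp x (SF a), Some b) -> Dv (x, Some (Rdiv b a)).
Proof. intros H1; apply (app1 _ _ (r_rdivR _ x a b)); auto; fin. Qed.
Lemma T_prodL u a b d : Dv (fill u (comp (SF a) (SF b)), d) -> Dv (fill u (SF (Prod a b)), d).
Proof. intros H1; apply (app1 _ _ (r_prodL _ u a b d)); auto; fin. Qed.
Lemma T_prodR x y a b : Dv (x, Some a) -> Dv (y, Some b) -> Dv (comp x y, Some (Prod a b)).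
Proof. intros H1 H2; apply (app2 _ _ _ (r_prodR _ x y a b)); auto; fin. Qed.
Lemma T_meetL1 u a b d : fm_L0 b = true -> Dv (fill u (SF a), d) -> Dv (fill u (SF (Meet a b)), d).
Proof. intros H0 H1; apply (app1 _ _ (r_meetL1 _ u a b d)); auto; fin. Qed.
Lemma T_meetL2 u a b d : fm_L0 a = true -> Dv (fill u (SF b), d) -> Dv (fill u (SF (Meet a b)), d).
Proof. intros H0 H1; apply (app1 _ _ (r_meetL2 _ u a b d)); auto; fin. Qed.
Lemma T_meetR x a b : Dv (x, Some a) -> Dv (x, Some b) -> Dv (x, Some (Meet a b)).
Proof. intros H1 H2; apply (app2 _ _ _ (r_meetR _ x a b)); auto; fin. Qed.
Lemma T_joinL u a b d : Dv (fill u (SF a), d) -> Dv (fill u (SF b), d) -> Dv (fill u (SF (Join a b)), d).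
Proof. intros H1 H2; apply (app2 _ _ _ (r_joinL _ u a b d)); auto; fin. Qed.
Lemma T_joinR1 x a b : fm_L0 b = true -> Dv (x, Some a) -> Dv (x, Some (Join a b)).
Proof. intros H0 H1; apply (app1 _ _ (r_joinR1 _ x a b)); auto; fin. Qed.
Lemma T_joinR2 x a b : fm_L0 a = true -> Dv (x, Some b) -> Dv (x, Some (Join a b)).
Proof. intros H0 H1; apply (app1 _ _ (r_joinR2 _ x a b)); auto; fin. Qed.
Lemma T_ex u x y d : r_e R = true -> Dv (fill u (comp x y), d) -> Dv (fill u (comp y x), d).
Proof. intros H0 H1; apply (app1 _ _ (r_ex Tgt u x y d H0)); auto; fin. Qed.
Lemma T_con u x d : r_c R = true -> Dv (fill u (comp x x), d) -> Dv (fill u x, d).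
Proof. intros H0 H1; apply (app1 _ _ (r_con Tgt u x d H0)); auto; fin. Qed.
Lemma T_wi u x d : r_w R = true -> st_L0 x = true -> Dv (fill u SEmp, d) -> Dv (fill u x, d).
Proof. intros H0 H2 H1; apply (app1 _ _ (r_wi Tgt u x d H0)); auto; fin. Qed.
Lemma T_wo x a : r_w R = true -> fm_L0 a = true -> Dv (x, None) -> Dv (x, Some a).
Proof. intros H0 H2 H1; apply (app1 _ _ (r_wo Tgt x a H0)); auto; fin. Qed.

Definition dL0 (d : option fm) := match d with None => true | Some a => fm_L0 a end.

Lemma zero_fill u d : r_w R = true -> ctx_L0 u = true -> dL0 d = true -> Dv (fill u (SF Zero), d).
Proof. intros Hw. induction u; intros Hu Hd; simpl in Hu; bsplit.
- destruct d; simpl. apply T_wo; auto. apply T_zero. apply T_zero.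
- pose proof (T_wi (CR (fill u (SF Zero)) Hole) s d Hw) as HH; simpl in HH;
  rewrite comp_None_r in HH; apply HH; auto.
- pose proof (T_wi (CL Hole (fill u (SF Zero))) s d Hw) as HH; simpl in HH; apply HH; auto.
Qed.

Definition hasZ x := exists v, ctx_L0 v = true /\ x = fill v (SF Zero).

Lemma zero_any x u d : r_w R = true -> hasZ x -> ctx_L0 u = true -> dL0 d = true -> Dv (fill u x, d).
Proof. intros Hw [v [Hv ->]] Hu Hd. rewrite <- fill_ccomp. apply zero_fill; auto.
  rewrite ccompL0, Hu, Hv; reflexivity. Qed.

Lemma hasZ_L0 x : hasZ x -> st_L0 x = true.
Proof. intros [v [Hv ->]]. rewrite fillL0, Hv; reflexivity. Qed.
Lemma hasZ_l x y : hasZ x -> st_L0 y = true -> hasZ (comp x y).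
Proof. intros [v [Hv ->]] Hy. exists (ccomp (CL Hole y) v). split.
  rewrite ccompL0; simpl; rewrite Hy, Hv; reflexivity. rewrite fill_ccomp; reflexivity. Qed.
Lemma hasZ_r x y : hasZ x -> st_L0 y = true -> hasZ (comp y x).
Proof. intros [v [Hv ->]] Hy. exists (ccomp (CR y Hole) v). split.
  rewrite ccompL0; simpl; rewrite Hy, Hv; reflexivity. rewrite fill_ccomp; reflexivity. Qed.

Fixpoint onesN n := match n with NF One => True | NF _ => False | NC x y => onesN x /\ onesN y end.
Definition onesS x := match x with None => True | Some n => onesN n end.

Lemma ones_eq n : onesN n -> forall u d, (Dv (fill u None, d) <-> Dv (fill u (Some n), d)).
Proof. induction n as [f|n1 IH1 n2 IH2]; intros Hn u d.
- destruct f; try contradiction. split. apply T_oneL. intros H; exact (T_cut _ _ _ _ T_one H).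
- destruct Hn as [H1 H2].
  replace (fill u (Some (NC n1 n2))) with (fill (ccomp u (CL Hole (Some n2))) (Some n1))
    by (rewrite fill_ccomp; reflexivity).
  rewrite <- IH1 by auto. rewrite fill_ccomp. simpl. apply IH2; auto.
Qed.
Lemma ones_S x u d : onesS x -> (Dv (fill u None, d) <-> Dv (fill u x, d)).
Proof. destruct x; simpl; [intros; apply ones_eq; auto | tauto]. Qed.
Lemma ones_comp x y : onesS x -> onesS y -> onesS (comp x y).
Proof. destruct x, y; simpl; auto. Qed.
Lemma ones_L0 x : onesS x -> st_L0 x = true.
Proof. destruct x as [n|]; simpl; auto. induction n as [f|]; simpl.
  destruct f; simpl; tauto. intros [H1 H2]; rewrite IHn1, IHn2; auto. Qed.
Lemma ones_in_l k y u d : onesS k -> (Dv (fill u (comp k y), d) <-> Dv (fill u y, d)).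
Proof. intros Hk. replace (fill u (comp k y)) with (fill (ccomp u (CL Hole y)) k)
    by (rewrite fill_ccomp; reflexivity).
  rewrite <- ones_S by auto. rewrite fill_ccomp; simpl; tauto. Qed.
Lemma ones_in_r k y u d : onesS k -> (Dv (fill u (comp y k), d) <-> Dv (fill u y, d)).
Proof. intros Hk. replace (fill u (comp y k)) with (fill (ccomp u (CR y Hole)) k)
    by (rewrite fill_ccomp; reflexivity).
  rewrite <- ones_S by auto. rewrite fill_ccomp; simpl; rewrite comp_None_r; tauto. Qed.

Inductive E := EB | ET | ER (a : fm).
Inductive ES := SB | ST | SR (x : st).
Inductive ED := DB | DT | DR (d : option fm).

Definition meetE x y := match x with EB => EB | ET => y
  | ER a => match y with EB => EB | ET => ER a | ER b => ER (Meet a b) end end.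
Definition joinE x y := match x with ET => ET | EB => y
  | ER a => match y with ET => ET | EB => ER a | ER b => ER (Join a b) end end.
Definition prodE x y := match x with EB => EB
  | ET => match y with EB => EB | _ => ET end
  | ER a => match y with EB => EB | ET => ET | ER b => ER (Prod a b) end end.
Definition ldivE x y := match x with EB => ET
  | ET => match y with ET => ET | _ => EB end
  | ER a => match y with ET => ET | EB => EB | ER b => ER (Ldiv a b) end end.
Definition rdivE x y := match y with EB => ET
  | ET => match x with ET => ET | _ => EB end
  | ER b => match x with ET => ET | EB => EB | ER a => ER (Rdiv a b) end end.
Definition ecomp e f := match e with SB => SB
  | ST => match f with SB => SB | _ => ST end
  | SR x => match f with SB => SB | ST => ST | SR y => SR (comp x y) end end.
Definition ofE v := match v with EB => SB | ET => ST | ER a => SR (SF a) end.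
Definition dofE v := match v with EB => DB | ET => DT | ER a => DR (Some a) end.

Definition V (e : ES) (d : ED) : Prop :=
  match e with
  | SB => True
  | ST => match d with DT => True | _ => False end
  | SR x => match d with DT => True | DB => False | DR d' => Dv (x, d') end
  end.
Definition le (e1 e2 : ES) : Prop :=
  match e1 with
  | SB => True
  | ST => match e2 with ST => True | _ => False end
  | SR x => match e2 with SB => False | ST => True
            | SR y => forall u d, Dv (fill u y, d) -> Dv (fill u x, d) end
  end.

Fixpoint val (a : fm) : E := match a with
  | Var n => ER (Var n)
  | Meet a b => meetE (val a) (val b)
  | Join a b => joinE (val a) (val b)
  | Prod a b => prodE (val a) (val b)
  | Ldiv a b => ldivE (val a) (val b)
  | Rdiv a b => rdivE (val a) (val b)
  | Bang a => if excluded_middle_informative (V (SR None) (dofE (val a))) then ER One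
              else if r_w R then ER Zero else EB
  | One => ER One
  | Zero => ER Zero end.

Fixpoint trn (n : nst) : ES := match n with NF a => ofE (val a) | NC x y => ecomp (trn x) (trn y) end.
Definition tr (x : st) : ES := match x with None => SR None | Some n => trn n end.
Definition dv (d : option fm) : ED := match d with None => DR None | Some a => dofE (val a) end.

Lemma tr_comp x y : tr (comp x y) = ecomp (tr x) (tr y).
Proof. destruct x as [n|], y as [m|]; simpl; auto;
  repeat match goal with |- context[trn ?n] => destruct (trn n) end; simpl; rewrite ?comp_None_r; auto. Qed.

Inductive cls := CB | CT | CRc (u : ctx).
Fixpoint clsOf (u : ctx) : cls := match u with
  | Hole => CRc Hole
  | CL u y => match clsOf u, tr y with
             | CB, _ => CB | _, SB => CB | CT, _ => CT | _, ST => CT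
             | CRc u', SR y' => CRc (CL u' y') end
  | CR x u => match tr x, clsOf u with
             | SB, _ => CB | _, CB => CB | ST, _ => CT | _, CT => CT
             | SR x', CRc u' => CRc (CR x' u') end
  end.
Definition cfill c e := match c with CB => SB
  | CT => match e with SB => SB | _ => ST end
  | CRc u => match e with SB => SB | ST => ST | SR z => SR (fill u z) end end.

Lemma tr_fill u z : tr (fill u z) = cfill (clsOf u) (tr z).
Proof. induction u as [|u IH y|x u IH]; simpl; rewrite ?tr_comp, ?IH; auto.
- destruct (tr z); reflexivity.
- destruct (clsOf u), (tr z), (tr y); reflexivity.
- destruct (clsOf u), (tr z), (tr x); reflexivity. Qed.

Lemma ctx_le c p k d : le c p -> V (cfill k p) d -> V (cfill k c) d.
Proof. destruct k, c, p, d; simpl; intros; auto; try contradiction. Qed.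

Lemma V_le e v : V e (dofE v) -> le e (ofE v).
Proof. destruct e, v; simpl; auto. intros H u d H2. exact (T_cut _ _ _ _ H H2). Qed.

Lemma le_top e : le e ST. Proof. destruct e; simpl; auto. Qed.
Lemma le_refl e : le e e. Proof. destruct e; simpl; auto. Qed.

Lemma val_L0 a : forall a', val a = ER a' -> fm_L0 a' = true.
Proof. induction a; intros a' H; simpl in H.
  all: try (injection H as <-; reflexivity).
  all: try (destruct (val a1) as [| |b1]; destruct (val a2) as [| |b2]; simpl in H;
    try discriminate; injection H as <-; simpl;
    try rewrite (IHa1 _ eq_refl); try rewrite (IHa2 _ eq_refl); auto; fail).
  destruct (excluded_middle_informative _); [|destruct (r_w R)]; try discriminate;
    injection H as <-; reflexivity.
Qed.

Lemma trn_L0 n : forall x', trn n = SR x' -> st_L0 x' = true.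
Proof. induction n as [a|n1 IH1 n2 IH2]; intros x' H; simpl in H.
- destruct (val a) eqn:E; try discriminate. injection H as <-. simpl. exact (val_L0 _ _ E).
- destruct (trn n1) eqn:E1, (trn n2) eqn:E2; simpl in H; try discriminate.
  injection H as <-. rewrite compL0, (IH1 _ eq_refl), (IH2 _ eq_refl); reflexivity.
Qed.
Lemma tr_L0 x x' : tr x = SR x' -> st_L0 x' = true.
Proof. destruct x; simpl. apply trn_L0. intros H; injection H as <-; reflexivity. Qed.

Lemma val_id a : fm_L0 a = true -> val a = ER a.
Proof. induction a; simpl; intros H; bsplit; try discriminate;
  try rewrite IHa1 by auto; try rewrite IHa2 by auto; reflexivity. Qed.
Lemma tr_id x : st_L0 x = true -> tr x = SR x.
Proof. destruct x as [n|]; simpl; auto. induction n as [a|n1 IH1 n2 IH2]; simpl; intros H.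
  rewrite val_id; auto. bsplit. rewrite IH1, IH2; auto. Qed.

Lemma val_w a : r_w R = true -> exists a', val a = ER a'.
Proof. intros Hw. induction a; simpl; eauto.
  all: try (destruct IHa1 as [b1 ->], IHa2 as [b2 ->]; simpl; eauto).
  destruct (excluded_middle_informative _); [|rewrite Hw]; eauto. Qed.
Lemma tr_w x : r_w R = true -> exists x', tr x = SR x'.
Proof. intros Hw. destruct x as [n|]; simpl; eauto. induction n as [a|n1 IH1 n2 IH2]; simpl.
  destruct (val_w a Hw) as [b ->]; simpl; eauto.
  destruct IH1 as [y1 ->], IH2 as [y2 ->]; simpl; eauto. Qed.

Lemma tr_k k : isK k -> tr k = SB \/ exists k', tr k = SR k' /\ (onesS k' \/ (r_w R = true /\ hasZ k')).
Proof. destruct k as [n|]; simpl; [|intros; right; exists None; simpl; auto].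
  induction n as [a|n1 IH1 n2 IH2]; simpl; intros Hk.
- destruct a; try contradiction. simpl.
  destruct (excluded_middle_informative _); [|destruct (r_w R) eqn:Hw]; simpl; auto.
  right; eexists; split; [reflexivity|simpl; auto].
  right; eexists; split; [reflexivity|right; split; auto; exists Hole; split; reflexivity].
- destruct Hk as [Hk1 Hk2]. destruct (IH1 Hk1) as [->|[y1 [-> H1]]]; simpl; auto.
  destruct (IH2 Hk2) as [->|[y2 [-> H2]]]; simpl; auto. right; exists (comp y1 y2); split; auto.
  destruct H1 as [H1|[Hw H1]].
  + destruct H2 as [H2|[Hw H2]]. left; apply ones_comp; auto.
    right; split; auto; apply hasZ_r; auto; apply ones_L0; auto.
  + right; split; auto; apply hasZ_l; auto. destruct H2 as [H2|[_ H2]].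
    apply ones_L0; auto. apply hasZ_L0; auto.
Qed.

Lemma DvL0c u z d : Dv (fill u z, d) -> ctx_L0 u = true /\ st_L0 z = true /\ dL0 d = true.
Proof. intros H; apply Dv_L0 in H. unfold seq_L0 in H; simpl in H. rewrite fillL0 in H.
  bsplit. auto. Qed.

Lemma dv_id d : dL0 d = true -> dv d = DR d.
Proof. destruct d; simpl; intros; auto. rewrite val_id; auto. Qed.

Lemma ones_ka1 k y z u d : onesS k -> (Dv (fill u (comp (comp k y) z), d) <-> Dv (fill u (comp y z), d)).
Proof. intros Hk. replace (fill u (comp (comp k y) z)) with (fill (ccomp u (CL Hole z)) (comp k y))
    by (rewrite fill_ccomp; reflexivity).
  rewrite ones_in_l by auto. rewrite fill_ccomp; simpl; tauto. Qed.
Lemma ones_ka2 k x y u d : onesS k -> (Dv (fill u (comp x (comp y k)), d) <-> Dv (fill u (comp x y), d)).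
Proof. intros Hk. replace (fill u (comp x (comp y k))) with (fill (ccomp u (CR x Hole)) (comp y k))
    by (rewrite fill_ccomp; reflexivity).
  rewrite ones_in_r by auto. rewrite fill_ccomp; simpl; tauto. Qed.

Definition Src := {| s_cyc := cyc; s_bang := true; s_R := R |}.

Ltac getL0 := repeat match goal with
  | H : Dv (fill ?u ?z, ?d) |- _ => let X := fresh in pose proof (DvL0c _ _ _ H) as X;
       destruct X as [? [? ?]]; revert H end; intros.

Theorem sound c : derivable Src S c -> V (tr (fst c)) (dv (snd c)).
Proof.
  induction 1 as [t Ht | prems c Hr _ Hp IH].
  { pose proof (HS t Ht) as H. destruct t as [x d]. unfold seq_L0 in H; simpl in H. bsplit.
    simpl. rewrite tr_id, dv_id by auto. simpl. apply d_hyp; auto. }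
  destruct Hr; cbn [fst snd] in *;
  try pose proof (IH _ (or_introl eq_refl)) as I1;
  try pose proof (IH _ (or_intror (or_introl eq_refl))) as I2; clear IH; cbn [fst snd] in *;
  rewrite ?tr_fill, ?tr_comp in *; cbn [tr trn dv SF SEmp] in *.
  - destruct (val a) eqn:E; simpl; auto. apply T_id; exact (val_L0 _ _ E).
  - simpl. apply T_one.
  - simpl. apply T_zero.
  - unfold tilde, minus; simpl. destruct (val a) eqn:E; simpl; auto.
    apply (T_in1 a0); exact (val_L0 _ _ E).
  - unfold tilde, minus; simpl. destruct (val a) eqn:E; simpl; auto.
    apply (T_in2 a0); exact (val_L0 _ _ E).
  - unfold tilde, minus; simpl. destruct (val a) eqn:E; destruct (val b) eqn:E'; simpl; auto.
    apply (T_in3 a0 a1); [exact (val_L0 _ _ E)|exact (val_L0 _ _ E')].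
  - unfold tilde, minus; simpl. destruct (val a) eqn:E; destruct (val b) eqn:E'; simpl; auto.
    apply (T_in4 a0 a1); [exact (val_L0 _ _ E)|exact (val_L0 _ _ E')].
  - unfold tilde, minus; simpl in *. destruct (val a) eqn:E; simpl; auto.
    apply (T_cy1 a0); auto; exact (val_L0 _ _ E).
  - unfold tilde, minus; simpl in *. destruct (val a) eqn:E; simpl; auto.
    apply (T_cy2 a0); auto; exact (val_L0 _ _ E).
  - eapply ctx_le; [apply V_le; exact I1|exact I2].
  - eapply ctx_le; [|exact I1]. simpl. intros u' d'; apply T_oneL.
  - destruct (tr x); simpl in *; auto. apply T_zeroR; auto.
  - eapply ctx_le; [|exact I2]. revert I1. simpl.
    destruct (tr x), (val a) eqn:E, (val b) eqn:E'; simpl; intros; auto; try contradiction.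
    apply T_ldivL; auto.
  - revert I1. simpl. destruct (tr x), (val a) eqn:E, (val b) eqn:E'; simpl; intros; auto; try contradiction.
    apply T_ldivR; auto.
  - eapply ctx_le; [|exact I2]. revert I1. simpl.
    destruct (tr x), (val a) eqn:E, (val b) eqn:E'; simpl; intros; auto; try contradiction.
    apply T_rdivL; auto.
  - revert I1. simpl. destruct (tr x), (val a) eqn:E, (val b) eqn:E'; simpl; intros; auto; try contradiction.
    apply T_rdivR; auto.
  - eapply ctx_le; [|exact I1]. simpl.
    destruct (val a) eqn:E, (val b) eqn:E'; simpl; intros; auto. apply T_prodL; auto.
  - revert I1 I2. simpl. destruct (tr x), (tr y), (val a) eqn:E, (val b) eqn:E'; simpl; intros; auto; try contradiction.
    apply T_prodR; auto.
  - eapply ctx_le; [|exact I1]. simpl.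
    destruct (val a) eqn:E, (val b) eqn:E'; simpl; intros; auto.
    apply T_meetL1; auto; exact (val_L0 _ _ E').
  - eapply ctx_le; [|exact I1]. simpl.
    destruct (val a) eqn:E, (val b) eqn:E'; simpl; intros; auto.
    apply T_meetL2; auto; exact (val_L0 _ _ E).
  - revert I1 I2. simpl. destruct (tr x), (val a) eqn:E, (val b) eqn:E'; simpl; intros; auto; try contradiction.
    apply T_meetR; auto.
  - revert I1 I2. simpl. destruct (val a) eqn:E, (val b) eqn:E'; simpl; intros; auto.
    destruct (clsOf u); simpl in *; auto. destruct (dv d); simpl in *; auto.
    apply T_joinL; auto.
  - revert I1. simpl. destruct (tr x), (val a) eqn:E, (val b) eqn:E'; simpl; intros; auto; try contradiction.
    apply T_joinR1; auto; exact (val_L0 _ _ E').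
  - revert I1. simpl. destruct (tr x), (val a) eqn:E, (val b) eqn:E'; simpl; intros; auto; try contradiction.
    apply T_joinR2; auto; exact (val_L0 _ _ E).
  - eapply ctx_le; [|exact I1]. cbn [val].
    destruct (excluded_middle_informative _) as [Hv|Hv].
    + destruct (val a) eqn:E; simpl in *; auto; try contradiction.
      intros u' d' HH. apply T_oneL. exact (T_cut _ _ _ _ Hv HH).
    + destruct (r_w R) eqn:Hw; simpl; auto.
      destruct (val_w a Hw) as [a' ->]; simpl. intros u' d' HH. getL0.
      apply zero_fill; auto.
  - destruct (tr_k k ltac:(assumption)) as [Ek|[k' [Ek Hk']]]; rewrite Ek in *; simpl; auto.
    cbn [val]. destruct (excluded_middle_informative _) as [Hv|Hv].
    + simpl. destruct Hk' as [Hk'|[Hw Hz]].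
      * apply (proj1 (ones_S k' Hole _ Hk')). apply T_one.
      * apply (zero_any k' Hole _ Hw Hz); reflexivity.
    + destruct Hk' as [Hk'|[Hw Hz]].
      * exfalso. apply Hv. destruct (val a); simpl in *; auto.
        apply (proj2 (ones_S k' Hole _ Hk')); auto.
      * rewrite Hw; simpl. apply (zero_any k' Hole _ Hw Hz); reflexivity.
  - eapply ctx_le; [|exact I1].
    destruct (tr_k k ltac:(assumption)) as [Ek|[k' [Ek Hk']]]; rewrite Ek; simpl; auto.
    intros u' d' HH. destruct Hk' as [Hk'|[Hw Hz]].
    + apply ones_S; auto.
    + getL0. apply zero_any; auto.
  - eapply ctx_le; [|exact I1].
    destruct (tr_k k ltac:(assumption)) as [Ek|[k' [Ek Hk']]]; rewrite Ek; simpl; auto.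
    intros u' d' HH. destruct Hk' as [Hk'|[Hw Hz]].
    + apply ones_S; auto. apply (ones_S (comp k' k')); auto. apply ones_comp; auto.
    + getL0. apply zero_any; auto.
  - eapply ctx_le; [|exact I1].
    destruct (tr_k k ltac:(assumption)) as [Ek|[k' [Ek Hk']]]; rewrite Ek; destruct (tr y) eqn:Ey; simpl; auto.
    intros u' d' HH. destruct Hk' as [Hk'|[Hw Hz]].
    + apply ones_in_r; auto. apply (ones_in_l k' x u' d' Hk'); auto.
    + getL0. apply zero_any; auto. apply hasZ_r; auto. exact (tr_L0 _ _ Ey).
  - eapply ctx_le; [|exact I1].
    destruct (tr_k k ltac:(assumption)) as [Ek|[k' [Ek Hk']]]; rewrite Ek; destruct (tr y) eqn:Ey; simpl; auto.
    intros u' d' HH. destruct Hk' as [Hk'|[Hw Hz]].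
    + apply ones_in_l; auto. apply (ones_in_r k' x u' d' Hk'); auto.
    + getL0. apply zero_any; auto. apply hasZ_l; auto. exact (tr_L0 _ _ Ey).
  - eapply ctx_le; [|exact I1].
    destruct (tr_k k ltac:(assumption)) as [Ek|[k' [Ek Hk']]]; rewrite Ek;
      destruct (tr y) eqn:Ey; destruct (tr z) eqn:Ez; simpl; auto.
    intros u' d' HH. destruct Hk' as [Hk'|[Hw Hz]].
    + apply ones_in_l; auto. apply (ones_ka1 k' x x0 u' d' Hk'); auto.
    + getL0. apply zero_any; auto. apply hasZ_l; auto. rewrite compL0, (tr_L0 _ _ Ey), (tr_L0 _ _ Ez); auto.
  - eapply ctx_le; [|exact I1].
    destruct (tr_k k ltac:(assumption)) as [Ek|[k' [Ek Hk']]]; rewrite Ek;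
      destruct (tr y) eqn:Ey; destruct (tr z) eqn:Ez; simpl; auto.
    intros u' d' HH. destruct Hk' as [Hk'|[Hw Hz]].
    + apply ones_ka1; auto. apply (ones_in_l k' _ u' d' Hk'); auto.
    + getL0. apply zero_any; auto. apply hasZ_l; auto. apply hasZ_l; auto. exact (tr_L0 _ _ Ey). exact (tr_L0 _ _ Ez).
  - eapply ctx_le; [|exact I1].
    destruct (tr_k k ltac:(assumption)) as [Ek|[k' [Ek Hk']]]; rewrite Ek;
      destruct (tr x) eqn:Ex; destruct (tr y) eqn:Ey; simpl; auto.
    intros u' d' HH. destruct Hk' as [Hk'|[Hw Hz]].
    + apply ones_ka2; auto. apply (ones_in_r k' _ u' d' Hk'); auto.
    + getL0. apply zero_any; auto. apply hasZ_r; auto. apply hasZ_r; auto. exact (tr_L0 _ _ Ey). exact (tr_L0 _ _ Ex).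
  - eapply ctx_le; [|exact I1].
    destruct (tr_k k ltac:(assumption)) as [Ek|[k' [Ek Hk']]]; rewrite Ek;
      destruct (tr x) eqn:Ex; destruct (tr y) eqn:Ey; simpl; auto.
    intros u' d' HH. destruct Hk' as [Hk'|[Hw Hz]].
    + apply ones_in_r; auto. apply (ones_ka2 k' _ _ u' d' Hk'); auto.
    + getL0. apply zero_any; auto. apply hasZ_r; auto. rewrite compL0, (tr_L0 _ _ Ey), (tr_L0 _ _ Ex); auto.
  - eapply ctx_le; [|exact I1]. simpl in *.
    destruct (tr x), (tr y); simpl; auto. intros u' d' HH. apply T_ex; auto.
  - eapply ctx_le; [|exact I1]. simpl in *.
    destruct (tr x); simpl; auto. intros u' d' HH. apply T_con; auto.
  - eapply ctx_le; [|exact I1]. simpl in *.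
    destruct (tr_w x ltac:(assumption)) as [x' Ex]; rewrite Ex; simpl. intros u' d' HH. apply T_wi; auto.
    exact (tr_L0 _ _ Ex).
  - simpl in *. destruct (val_w a ltac:(assumption)) as [a' Ea]. rewrite Ea. revert I1.
    destruct (tr x); simpl; auto. intros HH. apply T_wo; auto. exact (val_L0 _ _ Ea).
Qed.

End Main.

Lemma rule_mono cyc R p c : rule (Tgt cyc R) p c -> rule (Src cyc R) p c.
Proof. destruct 1; simpl in *; try discriminate; [ constructor 1; auto | constructor 2; auto | constructor 3; auto | constructor 4; auto | constructor 5; auto | constructor 6; auto | constructor 7; auto | constructor 8; auto | constructor 9; auto | constructor 10; auto | constructor 11; auto | constructor 12; auto | constructor 13; auto | constructor 14; auto | constructor 15; auto | constructor 16; auto | constructor 17; auto | constructor 18; auto | constructor 19; auto | constructor 20; auto | constructor 21; auto | constructor 22; auto | constructor 23; auto | constructor 24; auto | constructor 35; auto | constructor 36; auto | constructor 37; auto | constructor 38; auto ]. Qed.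

Lemma deriv_mono cyc R S s : derivable (Tgt cyc R) S s -> derivable (Src cyc R) S s.
Proof. induction 1 as [t Ht|p c Hr Hc Hp IH]. apply d_hyp; auto.
  apply (d_rule _ _ p c (rule_mono _ _ _ _ Hr)); auto. Qed.

Lemma conserv cyc R S s : (forall t, S t -> seq_L0 t = true) -> seq_L0 s = true ->
  (derivable (Src cyc R) S s <-> derivable (Tgt cyc R) S s).
Proof. intros HS Hs. split; [|apply deriv_mono].
  intros H. pose proof (sound cyc R S HS s H) as V1.
  destruct s as [x d]. unfold seq_L0 in Hs; simpl in Hs. bsplit.
  simpl in V1. rewrite (tr_id cyc R S x), (dv_id cyc R S d) in V1 by auto. exact V1. Qed.

Theorem mainTheorem17 (R : rset) (S : seqnt -> Prop) (s : seqnt) :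
  (forall t, S t -> seq_L0 t = true) -> seq_L0 s = true ->
  (derivable (NACCLLm R) S s <-> derivable (InFNL R) S s) /\
  (derivable (NACCLL R) S s <-> derivable (CyInFNL R) S s).
Proof. intros HS Hs. split; [exact (conserv false R S s HS Hs) | exact (conserv true R S s HS Hs)]. Qed.
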